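(* Let $k\ge1$, $G=(V,E)$ an inductively $k$-independent graph with $k$-independence ordering $v_1,\dots,v_n$, and $w:V\to\mathbb{Z}_{\ge0}$ vertex weights (write $w_i=w(v_i)$). Let $y$ and $S_{\mathrm{out}}$ be produced by the algorithm PD-MWIS described in the context. Then $w(S_{\mathrm{out}})=\sum_{v\in S_{\mathrm{out}}}w(v)\ge\sum_{i=1}^n y_i$.
   Context: $N(v)$ is the neighbourhood of $v$ (excluding $v$); $G$ is inductively $k$-independent with $k$-independence ordering $v_1,\dots,v_n$ if for every $i$, $G[N(v_i)\cap\{v_i,\dots,v_n\}]$ has no independent set of size more than $k$. Let $A_j=N(v_j)\cap\{v_{j+1},\dots,v_n\}$. Algorithm PD-MWIS: Phase 1: start with an empty stack $S$; for $i=1,\dots,n$: set $y_i=\max\{0,\ w_i-\sum_{j<i,\ v_i\in A_j}y_j\}$, and if $y_i>0$ push $v_i$ onto $S$. Phase 2: with $S_{\mathrm{out}}=\emptyset$, pop the vertices of $S$ one at a time (reverse insertion order), adding a popped $v$ to $S_{\mathrm{out}}$ whenever $S_{\mathrm{out}}\cap N(v)=\emptyset$. Output $S_{\mathrm{out}}$. *)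

(* Defs.v *)
From HB Require Import structures.
From mathcomp Require Import all_boot all_order all_algebra.
Set Implicit Arguments. Unset Strict Implicit. Unset Printing Implicit Defensive.
Import Order.TTheory GRing.Theory Num.Theory.
Local Open Scope ring_scope.

(* Simple graph on a finite vertex type V: edge relation e, symmetric and
   irreflexive.  The ordering v_1..v_n is a duplicate-free sequence vs listing
   every vertex; position (0-based) of u in the ordering is index u vs. *)

Section PDMWIS.
Variables (V : finType) (e : rel V) (vs : seq V).

Definition Nbr (v : V) : {set V} := [set u | e v u].

Definition independent (S : {set V}) : bool :=
  [forall x in S, forall y in S, ~~ e x y].

Definition inductively_k_independent (k : nat) : Prop :=
  forall v, v \in vs ->
  forall S : {set V},
    S \subset Nbr v :&: [set u | (index v vs <= index u vs)%N] ->
    independent S -> (#|S| <= k)%N.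

(* A_j = N(v_j) ∩ {v_{j+1},...,v_n}  (j 0-based, vj = v_j) *)
Definition Aset (j : nat) (vj : V) : {set V} :=
  Nbr vj :&: [set u | (j < index u vs)%N].

Variable w : V -> nat.

(* Phase 1.  acc = [:: (v_0,y_0); ...; (v_{i-1},y_{i-1})], v = v_i. *)
Definition ynext (acc : seq (V * int)) (v : V) : int :=
  Num.max 0 ((w v)%:Z -
    \sum_(j < size acc | v \in Aset j (nth (v, 0) acc j).1) (nth (v, 0) acc j).2).

Definition ylist : seq (V * int) :=
  foldl (fun acc v => rcons acc (v, ynext acc v)) [::] vs.

(* The stack: vertices with y_i > 0, in insertion order (last = top). *)
Definition stack : seq V := [seq p.1 | p <- ylist & 0 < p.2].

Definition Sout : {set V} :=
  foldl (fun (S : {set V}) v => if [disjoint S & Nbr v] then v |: S else S) set0 (rev stack).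

End PDMWIS.

(* Main.v *)
Require Import Defs.
From HB Require Import structures.
From mathcomp Require Import all_boot all_order all_algebra.
Import Order.TTheory GRing.Theory Num.Theory.
Local Open Scope ring_scope.


Lemma inv_foldl {V : finType} (e : rel V) (vs : seq V) (w : V -> nat) (x0 : V)
  (t s : seq V) (acc : seq (V * int)) :
  size acc = size s ->
  (forall i, (i < size acc)%N -> nth (x0, 0) acc i =
       (nth x0 s i, ynext e vs w (take i acc) (nth x0 s i))) ->
  let P := foldl (fun acc v => rcons acc (v, ynext e vs w acc v)) acc t in
  size P = size (s ++ t) /\
  (forall i, (i < size P)%N -> nth (x0, 0) P i =
       (nth x0 (s ++ t) i, ynext e vs w (take i P) (nth x0 (s ++ t) i))).
Proof.
elim: t s acc => [|v t IH] s acc Hs Hn /=; first by rewrite cats0.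
rewrite -cat_rcons; apply: IH; first by rewrite !size_rcons Hs.
move=> i; rewrite size_rcons ltnS leq_eqVlt => /orP[/eqP ->|Hi].
  by rewrite !nth_rcons Hs ltnn eqxx -cats1 takel_cat -Hs ?take_size.
by rewrite !nth_rcons -Hs Hi Hn // -cats1 takel_cat ?(ltnW Hi).
Qed.

Lemma P_char {V : finType} (e : rel V) (vs : seq V) (w : V -> nat) (x0 : V) :
  size (ylist e vs w) = size vs /\
  (forall i, (i < size vs)%N -> nth (x0, 0) (ylist e vs w) i =
       (nth x0 vs i, ynext e vs w (take i (ylist e vs w)) (nth x0 vs i))).
Proof.
have := @inv_foldl V e vs w x0 vs [::] [::] erefl (fun i (H : (i < 0)%N) => False_ind _ (notF H)).
by move=> /= [-> H]; split => // i Hi; apply: H; rewrite -/(ylist e vs w) ?[size _]/=.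
Qed.

Definition yv {V : finType} (e : rel V) (vs : seq V) (w : V -> nat) (x : V) : int :=
  (nth (x, 0) (ylist e vs w) (index x vs)).2.

Lemma ylist_map {V : finType} (e : rel V) (vs : seq V) (w : V -> nat) (x0 : V) :
  uniq vs -> ylist e vs w = [seq (x, yv e vs w x) | x <- vs].
Proof.
move=> Hu; have [Hs Hn] := P_char e vs w x0.
apply: (@eq_from_nth _ (x0, 0)); first by rewrite size_map.
move=> i Hi; rewrite Hs in Hi.
rewrite (nth_map x0) // /yv index_uniq //.
rewrite (set_nth_default (x0, 0) (nth x0 vs i, 0)) ?Hs //.
by rewrite Hn.
Qed.

Lemma sumV {V : finType} (vs : seq V) (x0 : V) (P : pred V) (F : V -> int) :
  uniq vs -> (forall v, v \in vs) ->
  \sum_(u | P u) F u = \sum_(0 <= j < size vs | P (nth x0 vs j)) F (nth x0 vs j).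
Proof.
move=> Hu Hall; rewrite -big_nth; apply: perm_big.
apply: uniq_perm => //; first exact: index_enum_uniq.
by move=> v; rewrite mem_index_enum Hall.
Qed.

Lemma yv_rec {V : finType} (e : rel V) (vs : seq V) (w : V -> nat) (x : V) :
  uniq vs -> (forall v, v \in vs) ->
  yv e vs w x = Num.max 0 ((w x)%:Z -
     \sum_(u | e u x && (index u vs < index x vs)%N) yv e vs w u).
Proof.
move=> Hu Hall; have [Hs Hn] := P_char e vs w x.
set i := index x vs.
have Hi : (i < size vs)%N by rewrite index_mem.
have Hx : nth x vs i = x := nth_index x (Hall x).
rewrite {1}/yv Hn // Hx /ynext.
congr (Num.max 0 (_ - _)).
rewrite (ylist_map e vs w x Hu) -map_take size_map size_take Hi.
rewrite -/i (sumV vs x) //.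
transitivity (\sum_(0 <= j < size vs | e (nth x vs j) x && (j < i)%N) yv e vs w (nth x vs j)); last first.
  rewrite [LHS]big_mkcond [RHS]big_mkcond; apply: eq_big_nat => j /andP[_ Hj].
  by rewrite index_uniq.
transitivity (\sum_(0 <= j < i | e (nth x vs j) x) yv e vs w (nth x vs j)); last first.
  by rewrite (big_nat_widen 0 i (size vs)) // ltnW.
rewrite big_mkord.
apply: eq_big => j.
  rewrite (nth_map x) ?size_take ?Hi // nth_take //= /Aset !inE ltn_ord andbT /i.
  by [].
move=> _; by rewrite (nth_map x) ?size_take ?Hi // nth_take.
Qed.
Lemma phase2 {V : finType} (e : rel V) (idx : V -> nat) (t : seq V) (S0 : {set V}) :
  sorted (fun a b => (idx b < idx a)%N) t ->
  (forall x u, x \in t -> u \in S0 -> (idx x < idx u)%N) ->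
  let S := foldl (fun (S : {set V}) v => if [disjoint S & Nbr e v] then v |: S else S) S0 t in
  [/\ S0 \subset S, S \subset S0 :|: [set x in t] &
      forall x, x \in t -> x \in S \/ exists2 u, u \in S & e x u && (idx x < idx u)%N].
Proof.
elim: t S0 => [|x t IH] S0 Hs Hlt /=.
  by split=> //; apply: subsetUl.
set S1 := (if _ then _ else _).
have Htr : transitive (fun a b => (idx b < idx a)%N).
  by move=> a b c H1 H2; exact: ltn_trans H2 H1.
have Hall := order_path_min Htr Hs.
have Hs' := path_sorted Hs.
have HS1 : S0 \subset S1 /\ S1 \subset x |: S0.
  rewrite /S1; case: ifP => _; split; rewrite ?subsetUr ?subxx //.
have HS1x : x \in S1 \/ exists2 u, u \in S1 & e x u && (idx x < idx u)%N.
  rewrite /S1; case: ifP => Hd; first by left; rewrite setU11.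
  right; move: Hd; rewrite -setI_eq0 => /set0Pn [u]; rewrite !inE => /andP[HuS Heu].
  exists u => //; rewrite Heu /=; apply: Hlt => //; exact: mem_head.
have H1 : forall y u, y \in t -> u \in S1 -> (idx y < idx u)%N.
  move=> y u Hy Hu; have := subsetP HS1.2 u Hu; rewrite !inE => /orP[/eqP ->|Hu0].
    by have := allP Hall y Hy.
  by apply: Hlt => //; rewrite inE Hy orbT.
have [IH1 IH2 IH3] := IH S1 Hs' H1.
split.
- exact: subset_trans HS1.1 IH1.
- apply: (subset_trans IH2); apply/subsetP => u; rewrite !inE => /orP[Hu|->]; last by rewrite !orbT.
  by have := subsetP HS1.2 u Hu; rewrite !inE => /orP[->|->]; rewrite ?orbT.
- move=> y; rewrite inE => /orP[/eqP ->|Hy]; last exact: IH3.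
  case: HS1x => [Hx|[u Hu Hxu]]; first by left; exact: subsetP IH1 x Hx.
  by right; exists u => //; exact: subsetP IH1 u Hu.
Qed.

Theorem lemma11 (V : finType) (e : rel V) (vs : seq V) (k : nat) (w : V -> nat) :
  symmetric e -> irreflexive e ->
  uniq vs -> (forall v : V, v \in vs) ->
  (1 <= k)%N ->
  inductively_k_independent e vs k ->
  \sum_(p <- ylist e vs w) p.2 <= \sum_(v in Sout e vs w) (w v)%:Z.
Proof.
move=> Hsym Hirr Hu Hall _ _.
have [Hnil|[x0 _]] : vs = [::] \/ exists x0, x0 \in vs.
  by case: vs {Hu Hall} => [|x r]; [left|right; exists x; exact: mem_head].
  by rewrite Hnil big_nil; apply: sumr_ge0 => v _; rewrite lez_nat.
set y := yv e vs w.
set idx := fun u => index u vs.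
have Hperm : perm_eq vs (index_enum V).
  apply: uniq_perm => //; first exact: index_enum_uniq.
  by move=> v; rewrite mem_index_enum Hall.
rewrite (ylist_map e vs w x0 Hu) big_map (perm_big _ Hperm) /=.
have Hstack : stack e vs w = [seq x <- vs | 0 < y x].
  by rewrite /stack (ylist_map e vs w x0 Hu) filter_map -map_comp map_id_in.
have Hy0 : forall u, 0 <= y u.
  by move=> u; rewrite /y (yv_rec e vs w u Hu Hall) le_max lexx.
have Hidx : [seq idx u | u <- vs] = iota 0 (size vs).
  apply: (@eq_from_nth _ 0%N); first by rewrite size_map size_iota.
  move=> i; rewrite size_map => Hi.
  by rewrite (nth_map x0) // nth_iota // add0n /idx index_uniq.
have Hsorted : sorted (fun a b => (idx b < idx a)%N) (rev (stack e vs w)).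
  rewrite rev_sorted Hstack; apply: sorted_filter.
    by move=> a b c; exact: ltn_trans.
  by rewrite -(sorted_map (f:=idx) (e':=ltn)) Hidx iota_ltn_sorted.
have [_ Hsub Hcov] : [/\ set0 \subset Sout e vs w,
     Sout e vs w \subset set0 :|: [set x in rev (stack e vs w)] &
      forall x, x \in rev (stack e vs w) -> x \in Sout e vs w \/
         exists2 u, u \in Sout e vs w & e x u && (idx x < idx u)%N].
  by apply: (phase2 e idx (rev (stack e vs w)) set0 Hsorted); move=> ? ?; rewrite inE.
set S := Sout e vs w in Hsub Hcov *.
have HSpos : forall v, v \in S -> 0 < y v.
  move=> v Hv; have := subsetP Hsub v Hv.
  by rewrite !inE mem_rev Hstack mem_filter => /andP[].
have Hcov' : forall u, 0 < y u -> u \in S \/ exists2 v, v \in S & e u v && (idx u < idx v)%N.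
  by move=> u Hp; apply: Hcov; rewrite mem_rev Hstack mem_filter Hp Hall.
pose Q u v := (u == v) || (e u v && (idx u < idx v)%N).
have Hw : forall v, v \in S -> (w v)%:Z = \sum_u (if Q u v then y u else 0).
  move=> v Hv; have Hp := HSpos v Hv.
  have Hr := yv_rec e vs w v Hu Hall; rewrite -/y in Hr.
  rewrite (bigD1 v) //= /Q eqxx /=.
  set s := \sum_(u | _) _ in Hr.
  have Hs : s = \sum_(u | u != v) (if (u == v) || (e u v && (idx u < idx v)%N) then y u else 0).
    rewrite /s big_mkcond (bigD1 v) //= Hirr /= add0r.
    by apply: eq_bigr => u /negbTE ->.
  rewrite -Hs.
  move: Hp; rewrite Hr maxEle; case: ifP => _; first by rewrite subrK.
  by rewrite ltxx.
rewrite [X in _ <= X](eq_bigr (fun v => \sum_u (if Q u v then y u else 0))); last first.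
  by move=> v Hv; rewrite Hw.
rewrite exchange_big /=.
apply: ler_sum => u _.
have [Hpos|Hnp] := ltP 0 (y u); last first.
  apply: le_trans Hnp _; apply: sumr_ge0 => v _; case: ifP => _ //; exact: Hy0.
have [v Hv HQ] : exists2 v, v \in S & Q u v.
  case: (Hcov' u Hpos) => [HuS|[v Hv Huv]]; first by exists u; rewrite // /Q eqxx.
  by exists v; rewrite // /Q Huv orbT.
rewrite (bigD1 v) //= HQ lerDl; apply: sumr_ge0 => x _; case: ifP => _ //; exact: Hy0.
Qed.
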